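(* For every integer $N\ge1$, $$\phi_N(y,z)=\{(q-1)z\}^{-N(N-1)/2}q^{-(N-2)(N-1)N/6}\det\Big(p_{2(N-i)+1}\big(y,q^{N-j}z\big)\Big)_{i,j=1}^{N},$$ i.e. the determinant has first row $p_{2N-1}(y,q^{N-1}z),p_{2N-1}(y,q^{N-2}z),\dots,p_{2N-1}(y,z)$ and last row $p_1(y,q^{N-1}z),\dots,p_1(y,z)$.
   Context: $q$ is a fixed nonzero complex constant that is not a root of unity; $y,z$ are variables. For $k\in\mathbb{Z}$ the polynomials $p_k(y,z)$ are defined by the generating function $\sum_{n\ge 0}p_n(y,z)t^n=\frac{(-(1-q)t;q)_\infty}{((1-q)yt;q)_\infty((1-q)zt;q)_\infty}$, with $(a;q)_\infty=\prod_{i\ge0}(1-aq^i)$, and $p_k=0$ for $k<0$; equivalently $p_n(y,z)=(1-q)^n\sum_{a+b+c=n}\frac{y^a z^b q^{c(c-1)/2}}{(q;q)_a(q;q)_b(q;q)_c}$ with $(q;q)_m=\prod_{j=1}^m(1-q^j)$. For $N>0$, $\phi_N(y,z)=\det\big(p_{N-2i+j+1}(y,z)\big)_{i,j=1}^N$. *)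

(* Defs.v *)
From HB Require Import structures.
From mathcomp Require Import all_boot all_order all_algebra.
From mathcomp Require Import reals complex.
Set Implicit Arguments. Unset Strict Implicit. Unset Printing Implicit Defensive.
Import Order.TTheory GRing.Theory Num.Theory.
Local Open Scope ring_scope.

Section Defs.
Variable C : fieldType.

Definition qpoch (q : C) (m : nat) : C := \prod_(j < m) (1 - q ^+ j.+1).

Definition pn (q : C) (n : nat) (y z : C) : C :=
  (1 - q) ^+ n *
  \sum_(a < n.+1) \sum_(b < (n - a).+1)
     let c := (n - a - b)%N in
     y ^+ a * z ^+ b * q ^+ ((c * c.-1) %/ 2)
       / (qpoch q a * qpoch q b * qpoch q c).

Definition pk (q : C) (k : int) (y z : C) : C :=
  if (k < 0)%R then 0 else pn q `|k|%N y z.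

(* phi_N(y,z) = det (p_{N-2i+j+1}(y,z))_{i,j=1}^N ; 0-indexed: p_{N-2i+j} *)
Definition phi (q : C) (N : nat) (y z : C) : C :=
  \det (\matrix_(i < N, j < N) pk q (N%:Z - 2 * i%:Z + j%:Z) y z).
End Defs.

(* Main.v *)
Require Import Defs.
From HB Require Import structures.
From mathcomp Require Import all_boot all_order all_algebra.
From mathcomp Require Import reals complex.
From mathcomp Require Import ring zify.
Import Order.TTheory GRing.Theory Num.Theory.
Local Open Scope ring_scope.

Section Rec.
Variable C : fieldType.
Variable q : C.
Hypothesis hq : forall n : nat, (0 < n)%N -> q ^+ n != 1.

Definition A (y : C) a := y ^+ a / qpoch q a.
Definition B (z : C) b := z ^+ b / qpoch q b.
Definition Cc c := q ^+ ((c * c.-1) %/ 2) / qpoch q c.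
Definition T z m := \sum_(b < m.+1) B z b * Cc (m - b).
Definition S y z n := \sum_(a < n.+1) A y a * T z (n - a).

Lemma pnE y z n : pn q n y z = (1 - q) ^+ n * S y z n.
Proof.
rewrite /pn /S; congr (_ * _); apply: eq_bigr => a _.
rewrite /T mulr_sumr; apply: eq_bigr => b _.
rewrite /A /B /Cc !invfM; ring.
Qed.

Lemma qpochS n : qpoch q n.+1 = qpoch q n * (1 - q ^+ n.+1).
Proof. by rewrite /qpoch big_ord_recr. Qed.

Lemma qpoch_neq0 n : qpoch q n != 0.
Proof.
rewrite /qpoch; apply/prodf_neq0 => i _.
by rewrite subr_eq0 eq_sym hq.
Qed.

Lemma qpoch0 : qpoch q 0 = 1.
Proof. by rewrite /qpoch big_ord0. Qed.

Lemma B_diff z b : B z b.+1 - B (q * z) b.+1 = z * B z b.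
Proof.
rewrite /B qpochS.
have h1 := qpoch_neq0 b.
have h2 : 1 - q ^+ b.+1 != 0 by rewrite subr_eq0 eq_sym hq.
rewrite exprMn exprS.
move: h1 h2; move: (qpoch q b) (q ^+ b.+1) (z ^+ b) => P X Z h1 h2.
by field; rewrite h1.
Qed.

Lemma B0 z : B z 0 = 1.
Proof. by rewrite /B qpoch0 expr0 invr1 mulr1. Qed.

Lemma T_diff z m : T z m.+1 - T (q * z) m.+1 = z * T z m.
Proof.
rewrite /T -sumrB big_ord_recl /= !B0 -mulrBl subrr mul0r add0r mulr_sumr.
apply: eq_bigr => b _.
by rewrite -mulrBl B_diff /bump /= subSS mulrA.
Qed.

Lemma T0 z z' : T z 0 = T z' 0.
Proof. by rewrite /T !big_ord1 !B0. Qed.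

Lemma S_diff y z n : S y z n.+1 - S y (q * z) n.+1 = z * S y z n.
Proof.
rewrite /S -sumrB big_ord_recr /= subnn (T0 (q * z) z) subrr addr0 mulr_sumr.
apply: eq_bigr => a _.
by rewrite -mulrBr subSn ?T_diff // 1?mulrCA // -ltnS.
Qed.

Lemma pn_rec y z n : pn q n.+1 y (q * z) = pn q n.+1 y z - (1 - q) * z * pn q n y z.
Proof.
have h : S y (q * z) n.+1 = S y z n.+1 - z * S y z n by rewrite -S_diff; ring.
by rewrite !pnE h exprS; ring.
Qed.

Lemma pn0 y z z' : pn q 0 y z = pn q 0 y z'.
Proof. by rewrite !pnE /S !big_ord1 !sub0n (T0 z z'). Qed.

Lemma pk_rec y z (n : int) : pk q n y (q * z) = pk q n y z - (1 - q) * z * pk q (n - 1) y z.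
Proof.
rewrite /pk; case: n => [n|n] /=.
  case: n => [|n] /=.
    by rewrite (pn0 y (q * z) z) mulr0 subr0.
  by rewrite subn1 pn_rec.
by rewrite mulr0 subr0.
Qed.

Section Coef.
Variable z : C.
Fixpoint cf (k : nat) : nat -> C :=
  match k with
  | 0 => fun m => (m == 0%N)%:R
  | k.+1 => fun m => (if (m <= k)%N then cf k m else 0)
              - (1 - q) * q ^+ k * z * (if m is m'.+1 then cf k m' else 0)
  end.

Lemma cfS k m : cf k.+1 m = (if (m <= k)%N then cf k m else 0)
              - (1 - q) * q ^+ k * z * (if m is m'.+1 then cf k m' else 0).
Proof. by []. Qed.

Lemma cf_big k m : (k < m)%N -> cf k m = 0.
Proof.
elim: k m => [|k IH] [|m] //= hm.
have -> : (m.+1 <= k)%N = false by lia.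
by rewrite IH // mulr0 subrr.
Qed.

Lemma cf_diag k : cf k k = ((q - 1) * z) ^+ k * q ^+ 'C(k, 2).
Proof.
elim: k => [|k IH]; first by rewrite /= expr0 mul1r bin0n expr0.
rewrite cfS ltnn IH binS bin1 !exprS exprD; ring.
Qed.

Lemma pk_expand k y (n : int) :
  pk q n y (q ^+ k * z) = \sum_(m < k.+1) cf k m * pk q (n - m%:Z) y z.
Proof.
elim: k n => [|k IH] n.
  by rewrite expr0 mul1r big_ord1 /= mul1r subr0.
have E1 : \sum_(m < k.+2) (if (m <= k)%N then cf k m else 0) * pk q (n - m%:Z) y z
    = \sum_(m < k.+1) cf k m * pk q (n - m%:Z) y z.
  rewrite big_ord_recr /= ltnn mul0r addr0; apply: eq_bigr => i _.
  by rewrite /= -ltnS ltn_ord.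
have E2 : \sum_(m < k.+2) (if (m : nat) is m'.+1 then cf k m' else 0) * pk q (n - m%:Z) y z
    = \sum_(m < k.+1) cf k m * pk q (n - 1 - m%:Z) y z.
  rewrite big_ord_recl /= mul0r add0r; apply: eq_bigr => i _.
  rewrite add0n /bump leq0n add1n; congr (_ * pk q _ y z); lia.
rewrite exprS -mulrA pk_rec !IH.
under [in RHS]eq_bigr => m _ do rewrite cfS mulrBl -mulrA.
by rewrite sumrB -mulr_sumr E1 E2 !mulrA.
Qed.
End Coef.

Lemma sum_bin2 n : (\sum_(k < n) 'C(k, 2))%N = 'C(n, 3).
Proof.
elim: n => [|n IH]; first by rewrite big_ord0.
by rewrite big_ord_recr /= IH binS addnC.
Qed.

Lemma sum_id n : (\sum_(k < n) k = (n * (n - 1)) %/ 2)%N.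
Proof.
rewrite -(big_mkord xpredT (fun k => k)) bin2_sum bin2 -divn2 subn1 //.
Qed.

Lemma bin3 n : ('C(n, 3) = ((n - 2) * (n - 1) * n) %/ 6)%N.
Proof.
rewrite bin_ffactd !ffactnS ffactn0 muln1 /=.
have -> : n.-1 = (n - 1)%N by lia.
have -> : (n - 1).-1 = (n - 2)%N by lia.
by rewrite [(n * _)%N]mulnC [((n - 1) * _)%N]mulnC.
Qed.

Lemma main_gen y z N : q != 0 -> z != 0 -> (1 <= N)%N ->
  phi q N y z =
    ((q - 1) * z) ^- ((N * (N - 1)) %/ 2) * q ^- (((N - 2) * (N - 1) * N) %/ 6)
    * \det (\matrix_(i < N, j < N)
              pn q (2 * (N - 1 - i) + 1) y (q ^+ (N - 1 - j) * z)).
Proof.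
move=> hq0 hz hN.
set Phi := \matrix_(i < N, j < N) pk q (N%:Z - 2 * i%:Z + j%:Z) y z.
set U := \matrix_(l < N, j < N) cf z (N - 1 - j) (N - 1 - l).
have HM : \matrix_(i < N, j < N) pn q (2 * (N - 1 - i) + 1) y (q ^+ (N - 1 - j) * z)
          = Phi *m U.
  apply/matrixP => i j; rewrite !mxE.
  have -> : pn q (2 * (N - 1 - i) + 1) y (q ^+ (N - 1 - j) * z)
          = pk q (2 * (N - 1 - i) + 1)%N y (q ^+ (N - 1 - j) * z) by [].
  rewrite pk_expand.
  have hle : ((N - 1 - j).+1 <= N)%N by have := ltn_ord j; lia.
  rewrite (big_ord_widen N (fun m : nat => cf z (N - 1 - j) m
              * pk q ((2 * (N - 1 - i) + 1)%N%:Z - m%:Z) y z) hle).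
  rewrite big_mkcond (reindex_inj rev_ord_inj) /=.
  apply: eq_bigr => l _; rewrite !mxE.
  case: ifP => h.
    rewrite mulrC; congr (_ * _).
      congr (pk q _ y z); have := ltn_ord i; have := ltn_ord l; lia.
    congr (cf z _ _); lia.
  rewrite cf_big; last by lia.
  by rewrite mulr0.
have HU : \det U = ((q - 1) * z) ^+ ((N * (N - 1)) %/ 2) * q ^+ (((N - 2) * (N - 1) * N) %/ 6).
  rewrite det_trig; last first.
    apply/forallP => l; apply/forallP => j; apply/implyP => hlj.
    rewrite mxE cf_big //; have := ltn_ord j; lia.
  under eq_bigr => j _ do rewrite mxE cf_diag.
  rewrite (reindex_inj rev_ord_inj) /= big_split /= !prodrXr -sum_id -bin3 -sum_bin2.
  by congr (_ ^+ _ * _ ^+ _); apply: eq_bigr => j _; have hj := ltn_ord j;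
    have -> : (N - 1 - (N - j.+1) = j)%N by lia.

rewrite HM det_mulmx HU /phi -/Phi.
have hq1 : q - 1 != 0 by rewrite subr_eq0 -(expr1 q) hq.
have hX : ((q - 1) * z) ^+ ((N * (N - 1)) %/ 2) != 0 by rewrite expf_neq0 // mulf_neq0.
have hY : q ^+ (((N - 2) * (N - 1) * N) %/ 6) != 0.
  by rewrite expf_neq0.
move: hX hY; move: (((q - 1) * z) ^+ _) (q ^+ _) => X Y hX hY.
by field; rewrite hX hY.
Qed.
End Rec.

Theorem lemma4 (R : realType) (q y z : R[i]) (N : nat)
  (hq0 : q != 0) (hq_not_root : forall n : nat, (0 < n)%N -> q ^+ n != 1)
  (hz : z != 0) (hN : (1 <= N)%N) :
  phi q N y z =
    ((q - 1) * z) ^- ((N * (N - 1)) %/ 2) * q ^- (((N - 2) * (N - 1) * N) %/ 6)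
    * \det (\matrix_(i < N, j < N)
              pn q (2 * (N - 1 - i) + 1) y (q ^+ (N - 1 - j) * z)).
Proof. exact: main_gen. Qed.
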